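(* Let $X$ be a continuous random variable with finite support $[a,b]$. For each $n$, let $X_1, \dots, X_n$ be i.i.d. samples from $X$ and let $X_{(1)} \le X_{(2)} \le \dots \le X_{(n)}$ denote their order statistics. Then $E[X_{(k+1)} - X_{(k)}] \to 0$ as $n \to \infty$ uniformly in $k$; that is, for every $\varepsilon > 0$ there exists $N$ such that for all $n > N$ and all $1 \le k \le n-1$, $E[X_{(k+1)} - X_{(k)}] < \varepsilon$. *)

(* Defs.v *)
From HB Require Import structures.
From mathcomp Require Import all_boot all_order all_algebra.
From mathcomp Require Import all_classical all_reals all_analysis.
Set Implicit Arguments. Unset Strict Implicit. Unset Printing Implicit Defensive.
Import Order.TTheory GRing.Theory Num.Theory.
Import numFieldNormedType.Exports.
Local Open Scope classical_set_scope.
Local Open Scope ring_scope.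

(* X is a continuous random variable: its distribution has no atoms
   (equivalently its CDF is continuous). *)
Definition continuous_rv d (T : measurableType d) (R : realType)
  (P : probability T R) (X : {RV P >-> R}) : Prop :=
  forall x : R, P (X @^-1` [set x]) = 0%E.

Definition support_is d (T : measurableType d) (R : realType)
  (P : probability T R) (X : {RV P >-> R}) (a b : R) : Prop :=
  P (X @^-1` `[a, b]) = 1%E /\
  forall x : R, a <= x <= b -> forall r : R, 0 < r ->
    (0 < P (X @^-1` ball x r))%E.

Definition mutually_independent d (T : measurableType d) (R : realType)
  (P : probability T R) (n : nat) (Xs : 'I_n -> {RV P >-> R}) : Prop :=
  forall B : 'I_n -> set R, (forall i, measurable (B i)) ->
    P (\bigcap_(i in [set: 'I_n]) (Xs i @^-1` B i)) =
    (\prod_(i < n) P (Xs i @^-1` B i))%E.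

Definition same_law d (T : measurableType d) d' (T' : measurableType d')
  (R : realType) (P : probability T R) (Y : {RV P >-> R})
  (P' : probability T' R) (X : {RV P' >-> R}) : Prop :=
  forall B : set R, measurable B -> P (Y @^-1` B) = P' (X @^-1` B).

Definition iid_sample d (T : measurableType d) d' (T' : measurableType d')
  (R : realType) (P : probability T R) (n : nat) (Xs : 'I_n -> {RV P >-> R})
  (P' : probability T' R) (X : {RV P' >-> R}) : Prop :=
  mutually_independent Xs /\ forall i, same_law (Xs i) X.

(* k-th order statistic (1-indexed): X_(1) <= ... <= X_(n). *)
Definition order_stat d (T : measurableType d) (R : realType)
  (P : probability T R) (n : nat) (Xs : 'I_n -> {RV P >-> R}) (k : nat)
  (w : T) : R :=
  nth 0 (sort <=%R [seq Xs i w | i <- enum 'I_n]) k.-1.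

(* Main.v *)
Require Import Defs.
From HB Require Import structures.
From mathcomp Require Import all_boot all_order all_algebra.
From mathcomp Require Import all_classical all_reals all_analysis.
From mathcomp Require Import measurable_realfun.
From mathcomp Require Import zify ring lra.
Import Order.TTheory GRing.Theory Num.Theory.
Import numFieldNormedType.Exports.
Local Open Scope classical_set_scope.
Local Open Scope ring_scope.

Lemma int_mono d (T : measurableType d) (R : realType)
  (mu : {measure set T -> \bar R}) (f g : T -> \bar R) :
  (forall x, (0 <= f x)%E) -> (forall x, (0 <= g x)%E) ->
  (forall x, (f x <= g x)%E) ->
  (\int[mu]_x f x <= \int[mu]_x g x)%E.
Proof.
move=> f0 g0 fg; rewrite !ge0_integralTE//.
apply: le_ereal_sup => _ [h hf <-]; exists h => //= x.
exact: le_trans (hf x) (fg x).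
Qed.

Lemma geom_small (R : realType) (q eta : R) : 0 <= q < 1 -> 0 < eta ->
  exists N : nat, forall n, (N < n)%N -> q ^+ n < eta.
Proof.
move=> /andP[q0 q1] e0.
have : (fun n => q ^+ n) @ \oo --> (0:R) by apply: cvg_expr; rewrite ger0_norm.
move=> /cvgrPdist_lt /(_ _ e0) [N _ HN].
exists N => n Nn; have := HN n (ltnW Nn).
by rewrite sub0r normrN ger0_norm ?exprn_ge0.
Qed.
Lemma gap (R : realType) n (f : 'I_n -> R) k (a dl : R) (m : nat) :
  (1 <= k <= n.-1)%N -> 0 < dl ->
  (forall i, a <= f i <= a + m%:R * dl) ->
  (forall j : 'I_m.+1, exists i, ball (a + j%:R * dl) (dl / 2) (f i)) ->
  forall s, s = sort <=%R [seq f i | i <- enum 'I_n] ->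
  nth 0 s k - nth 0 s k.-1 < 2 * dl.
Proof.
move=> /andP[k1 kn] dl0 fab hit _ ->.
set s := sort _ _.
have ss : sorted <=%R s by apply: sort_sorted; exact: le_total.
have sz : size s = n by rewrite size_sort size_map size_enum_ord.
have ins y : y \in s -> exists i, y = f i.
  by rewrite mem_sort => /mapP[i _ ->]; exists i.
have kn' : (k < n)%N by lia.
have kn'' : (k.-1 < n)%N by apply: leq_ltn_trans kn'; apply: leq_pred.
set x := nth 0 s k.-1; set y := nth 0 s k.
have [ix ex] : exists i, x = f i by apply: ins; apply: mem_nth; rewrite sz.
have [iy ey] : exists i, y = f i by apply: ins; apply: mem_nth; rewrite sz.
rewrite ltNge; apply/negP => gapH.
set t := (x + dl / 2 - a) / dl.
have t0 : 0 <= t.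
  apply: divr_ge0; last exact: ltW.
  by case/andP: (fab ix); rewrite -ex; lra.
have /andP[tl tu] := truncn_itv t0.
set j := (Num.truncn t).+1.
have cj1 : x + dl / 2 < a + j%:R * dl.
  by rewrite -ltrBlDl -ltr_pdivrMr.
have teq : t * dl = x + dl / 2 - a by rewrite /t mulfVK ?gt_eqF.
have cj2 : a + j%:R * dl <= y - dl / 2.
  have : j%:R <= t + 1 by rewrite /j -addn1 natrD lerD2r.
  rewrite -(ler_pM2r dl0) mulrDl mul1r teq => h.
  lra.
have jm : (j < m.+1)%N.
  rewrite -(ltr_nat R) -(ltr_pM2r dl0).
  have := fab iy; rewrite -ey => /andP[_ yb].
  rewrite -natr1 mulrDl mul1r; lra.
have [i hi] := hit (Ordinal jm).
move: hi; rewrite -ball_normE /= ltr_norml => /andP[h1 h2].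
have xi : x < f i by lra.
have iy' : f i < y by lra.
have fis : f i \in s by rewrite mem_sort; apply: map_f; rewrite mem_enum.
have pn : (index (f i) s < size s)%N by rewrite index_mem.
have nth_i := nth_index 0 fis.
have [pk|pk] := leqP (index (f i) s) k.-1.
  have := sorted_leq_nth le_trans lexx 0 ss; move=> /(_ (index (f i) s) k.-1).
  rewrite !inE pn sz kn'' => /(_ isT isT pk); rewrite nth_i -/x; lra.
have pk' : (k <= index (f i) s)%N by lia.
have := sorted_leq_nth le_trans lexx 0 ss; move=> /(_ k (index (f i) s)).
rewrite !inE pn sz kn' => /(_ isT isT pk'); rewrite nth_i -/y; lra.
Qed.

Lemma gap_basic (R : realType) n (f : 'I_n -> R) k (a b : R) :
  (1 <= k <= n.-1)%N -> forall s, s = sort <=%R [seq f i | i <- enum 'I_n] ->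
  0 <= nth 0 s k - nth 0 s k.-1 /\
  ((forall i, a <= f i <= b) -> nth 0 s k - nth 0 s k.-1 <= b - a).
Proof.
move=> /andP[k1 kn] _ ->; set s := sort _ _.
have ss : sorted <=%R s by apply: sort_sorted; exact: le_total.
have sz : size s = n by rewrite size_sort size_map size_enum_ord.
have ins y : y \in s -> exists i, y = f i.
  by rewrite mem_sort => /mapP[i _ ->]; exists i.
have kn' : (k < n)%N by lia.
have kn'' : (k.-1 < n)%N by lia.
split.
  rewrite subr_ge0; have := sorted_leq_nth le_trans lexx 0 ss.
  move=> /(_ k.-1 k); rewrite !inE sz kn' kn''; apply => //; lia.
have [ix ex] : exists i, nth 0 s k.-1 = f i by apply: ins; apply: mem_nth; rewrite sz.
have [iy ey] : exists i, nth 0 s k = f i by apply: ins; apply: mem_nth; rewrite sz.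
move=> fab; rewrite ex ey; have := fab ix; have := fab iy; move=> /andP[h1 h2] /andP[h3 h4].
lra.
Qed.

Lemma mEFin d (T : measurableType d) (R : realType) (D : set T) (g : T -> R) :
  measurable_fun D g -> measurable_fun D (fun w => (g w)%:E).
Proof. by move=> mg; apply/measurable_EFinP. Qed.

Theorem theorem2 (R : realType) (d0 : measure_display) (T0 : measurableType d0)
  (P0 : probability T0 R) (X : {RV P0 >-> R}) (a b : R) :
  continuous_rv X -> support_is X a b ->
  forall eps : R, 0 < eps ->
  exists N : nat, forall n : nat, (N < n)%N ->
    forall (d : measure_display) (T : measurableType d) (P : probability T R)
      (Xs : 'I_n -> {RV P >-> R}),
    iid_sample Xs X ->
    forall k : nat, (1 <= k <= n.-1)%N ->
      ('E_P[fun w => (order_stat Xs k.+1 w - order_stat Xs k w)%R] < eps%:E)%E.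
Proof.
move=> Xc [Pab Psupp] eps eps0.
have mX (A : set R) : measurable A -> measurable (X @^-1` A).
  by move=> mA; exact: measurable_funPTI.
have ab : a < b.
  case: (ltgtP a b) => // [ba|eab].
    have : X @^-1` `[a, b] = set0.
      apply/seteqP; split => // x /=; rewrite in_itv /= => /andP[h1 h2].
      by have := le_trans h1 h2; rewrite leNgt ba.
    by move=> h; move: Pab; rewrite h measure0 => -[] /eqP; rewrite eq_sym oner_eq0.
  by move: Pab; rewrite eab set_itv1 Xc => -[] /eqP; rewrite eq_sym oner_eq0.
set L := b - a.
have L0 : 0 < L by rewrite subr_gt0.
set m := (Num.truncn (4 * L / eps)).+1.
have m0 : 0 < m%:R :> R by rewrite ltr0n.
set dl := L / m%:R.
have dl0 : 0 < dl by rewrite divr_gt0.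
have mdl : m%:R * dl = L by rewrite /dl mulrC divfK ?gt_eqF.
have dleps : 2 * dl < eps / 2.
  have : 4 * L / eps < m%:R.
    have /andP[_ h] := truncn_itv (divr_ge0 (mulr_ge0 (ler0n _ 4) (ltW L0)) (ltW eps0)).
    exact: h.
  rewrite ltr_pdivrMr // => h.
  rewrite -(ltr_pM2l m0); nra.
set c := fun j : nat => a + j%:R * dl.
set r := dl / 2.
have r0 : 0 < r by rewrite divr_gt0.
have cab (j : 'I_m.+1) : a <= c j <= b.
  have jm : (j%:R : R) <= m%:R by rewrite ler_nat -ltnS.
  have : j%:R * dl <= m%:R * dl by rewrite ler_pM2r.
  rewrite mdl /c /L => h; apply/andP; split; last by lra.
  by rewrite lerDl mulr_ge0 // ltW.
have mB (j : nat) : measurable (X @^-1` ball (c j) r) by apply: mX; exact: measurable_ball.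
set p := fun j : nat => fine (P0 (X @^-1` ball (c j) r)).
have Pp (j : nat) : P0 (X @^-1` ball (c j) r) = (p j)%:E.
  by rewrite /p fineK // fin_num_measure.
have p0 (j : 'I_m.+1) : 0 < p j by rewrite -lte_fin -Pp; apply: Psupp.
have p1 (j : nat) : p j <= 1 by rewrite -lee_fin -Pp; apply: probability_le1.
set eta := eps / (2 * L * (m.+1)%:R).
have eta0 : 0 < eta by rewrite divr_gt0 // !mulr_gt0 // ltr0n.
have hj (j : 'I_m.+1) : exists N : nat, forall n, (N < n)%N -> (1 - p j) ^+ n < eta.
  apply: geom_small => //; have := p0 j; have := p1 j; move=> h1 h2.
  apply/andP; split; lra.
have [Nf HN] := fin_all_exists hj.
exists (\max_(j < m.+1) Nf j) => n Nn d T P Xs [ind law] k hk.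
have mXs (i : 'I_n) (A : set R) : measurable A -> measurable (Xs i @^-1` A).
  by move=> mA; exact: measurable_funPTI.
set G := \bigcap_(i in [set: 'I_n]) (Xs i @^-1` `[a, b]).
set B := fun j : nat => \bigcap_(i in [set: 'I_n]) (Xs i @^-1` (~` ball (c j) r)).
have mG : measurable G.
  by apply: fin_bigcap_measurable => // i _; apply: mXs; exact: measurable_itv.
have mBj j : measurable (B j).
  apply: fin_bigcap_measurable => // i _; apply: mXs; apply: measurableC.
  exact: measurable_ball.
have PG : P G = 1%E.
  rewrite /G (ind (fun _ => [set` `[a, b]])); last by move=> _; exact: measurable_itv.
  rewrite big1 // => i _; rewrite law //; exact: measurable_itv.
have PGc : P (~` G) = 0%E by rewrite probability_setC // PG subee.
have PB j : P (B j) = ((1 - p j) ^+ n)%:E.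
  rewrite /B (ind (fun _ => ~` ball (c j) r)); last first.
    by move=> _; apply: measurableC; exact: measurable_ball.
  have e i : P (Xs i @^-1` ~` ball (c j) r) = (1 - p j)%:E.
    rewrite law; last by apply: measurableC; exact: measurable_ball.
    by rewrite -preimage_setC probability_setC // Pp.
  under eq_bigr => i _ do rewrite e.
  by rewrite prodEFin prodr_const card_ord.
set g := fun w => order_stat Xs k.+1 w - order_stat Xs k w.
set hb := fun w => ((2 * dl)%:E + (L * \sum_(j < m.+1) \1_(B j) w)%:E
   + +oo * (\1_(~` G) w)%:E)%E.
have gE w : g w = nth 0 (sort <=%R [seq Xs i w | i <- enum 'I_n]) k -
   nth 0 (sort <=%R [seq Xs i w | i <- enum 'I_n]) k.-1 by [].
have g0 w : 0 <= g w by rewrite gE; case: (@gap_basic R n (fun i => Xs i w) k a b hk _ erefl).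
have gle w : ((g w)%:E <= hb w)%E.
  rewrite (_ : hb w = ((2 * dl)%:E + (L * \sum_(j < m.+1) \1_(B j) w)%:E
   + +oo * (\1_(~` G) w : R)%:E)%E) //.
  have [Gw|nGw] := pselect (G w); last first.
    have -> : \1_(~` G) w = 1 :> R by rewrite indicE mem_set.
    by rewrite mule1 addey ?leey.
  have -> : \1_(~` G) w = 0 :> R.
    by rewrite indicE memNset //= => /(_ Gw).
  rewrite mule0 adde0 -EFinD lee_fin.
  have fab i : a <= Xs i w <= b.
    by have := Gw i Logic.I; rewrite /= in_itv.
  have [gg0 gL] := @gap_basic R n (fun i => Xs i w) k a b hk _ erefl.
  have gL' := gL fab.
  have S0 : 0 <= \sum_(j < m.+1) \1_(B j) w :> R.
    by apply: sumr_ge0 => j _; rewrite indicE ler0n.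
  have LS0 : 0 <= L * \sum_(j < m.+1) \1_(B j) w by rewrite mulr_ge0 // ltW.
  case: (pselect (exists j : 'I_m.+1, B j w)) => [[j Bj]|nB].
    have S1 : 1 <= \sum_(j < m.+1) \1_(B j) w :> R.
      rewrite (bigD1 j) //= indicE mem_set // lerDl.
      by apply: sumr_ge0 => i _; rewrite indicE ler0n.
    have LS : L <= L * \sum_(j < m.+1) \1_(B j) w by rewrite ler_peMr // ltW.
    rewrite gE; rewrite /L in LS gL' *; lra.
  have hit (j : 'I_m.+1) : exists i, ball (a + j%:R * dl) (dl / 2) (Xs i w).
    case: (pselect (exists i, ball (c j) r (Xs i w))) => // nh.
    exfalso; apply: nB; exists j => i _ hball; apply: nh; by exists i.
  have fab' i : a <= Xs i w <= a + m%:R * dl.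
    by rewrite mdl /L addrC subrK; exact: fab.
  have := @gap R n (fun i => Xs i w) k a dl m hk dl0 fab' hit _ erefl.
  by rewrite -gE => h; lra.
have Ehb : (\int[P]_w hb w = (2 * dl)%:E + (L * \sum_(j < m.+1) (1 - p j) ^+ n)%:E)%E.
  have mS : measurable_fun setT (fun w => (L * \sum_(j < m.+1) \1_(B j) w)%:E).
    apply: mEFin; apply: measurable_funM; first exact: measurable_cst.
    by apply: measurable_sum => j; apply: measurable_indic.
  have mI : measurable_fun setT (fun w => (\1_(~` G) w : R)%:E).
    by apply: mEFin; apply: measurable_indic; apply: measurableC.
  rewrite (_ : (\int[P]_w hb w = \int[P]_w ((2 * dl)%:E + (L * \sum_(j < m.+1) \1_(B j) w)%:E
   + +oo * (\1_(~` G) w : R)%:E))%E) //.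
  have h1 : forall w, [set: T] w -> (0 <= (2 * dl)%:E + (L * \sum_(j < m.+1) \1_(B j) w)%:E)%E.
    by move=> w _; apply: adde_ge0; rewrite lee_fin mulr_ge0 ?sumr_ge0 // ltW.
  have m1 : measurable_fun setT (fun w => ((2 * dl)%:E + (L * \sum_(j < m.+1) \1_(B j) w)%:E)%E).
    by apply: emeasurable_funD => //; exact: measurable_cst.
  have h2 : forall w, [set: T] w -> (0 <= +oo * (\1_(~` G) w : R)%:E)%E.
    by move=> w _; apply: mule_ge0 => //; rewrite lee_fin.
  have m2 : measurable_fun setT (fun w => (+oo * (\1_(~` G) w : R)%:E)%E).
    exact: measurable_funeM.
  rewrite (ge0_integralD _ measurableT h1 m1 h2 m2).
  have h3 : forall w, [set: T] w -> (0 <= (2 * dl)%:E)%E.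
    by move=> w _; rewrite lee_fin mulr_ge0 // ltW.
  have h4 : forall w, [set: T] w -> (0 <= (L * \sum_(j < m.+1) \1_(B j) w)%:E)%E.
    by move=> w _; rewrite lee_fin mulr_ge0 ?sumr_ge0 // ltW.
  rewrite (ge0_integralD _ measurableT h3 (measurable_cst _) h4 mS).
  rewrite ge0_integralZl //.
  have I0 : (\int[P]_x (\1_(~` G) x : R)%:E = 0)%E.
    by rewrite integral_indic ?setIT //; exact: measurableC.
  rewrite I0 mule0 adde0.
  have -> : (\int[P]_w (2 * dl)%:E = (2 * dl)%:E)%E.
    rewrite integral_cst //; transitivity ((2 * dl)%:E * 1)%E; last exact: mule1. by congr (_ * _)%E; exact: probability_setT.
  congr (_ + _)%E.
  under eq_integral => w _ do rewrite EFinM -sumEFin.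
  rewrite ge0_integralZl_EFin //; last 3 first.
  - by move=> w _; apply: sume_ge0 => j _; rewrite lee_fin.
  - by apply: emeasurable_fun_sum => j; apply: mEFin; apply: measurable_indic.
  - exact: ltW.
  rewrite ge0_integral_sum //; last first.
    by move=> j; apply: mEFin; apply: measurable_indic.
  have IB (j : 'I_m.+1) : (\int[P]_x (\1_(B j) x : R)%:E = ((1 - p j) ^+ n)%:E)%E.
    rewrite integral_indic // setIT; exact: PB.
  under eq_bigr => j _ do rewrite IB.
  by rewrite sumEFin EFinM.
have hb0 w : (0 <= hb w)%E.
  rewrite /hb; apply: adde_ge0; first apply: adde_ge0.
  - by rewrite lee_fin mulr_ge0 // ltW.
  - by rewrite lee_fin mulr_ge0 ?sumr_ge0 // ltW.
  - by apply: mule_ge0 => //; rewrite lee_fin.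
rewrite unlock.
apply: (le_lt_trans (@int_mono d T R P (fun w => (g w)%:E) hb _ hb0 gle)).
  by move=> w; rewrite lee_fin.
rewrite Ehb -EFinD lte_fin.
have S1 : \sum_(j < m.+1) (1 - p j) ^+ n <= (m.+1)%:R * eta.
  apply: (@le_trans _ _ (\sum_(j < m.+1) eta)); last first.
    by rewrite sumr_const card_ord mulr_natl.
  apply: ler_sum => j _; apply: ltW; apply: HN.
  exact: leq_ltn_trans (leq_bigmax j) Nn.
have S2 : L * ((m.+1)%:R * eta) = eps / 2.
  by rewrite /eta; field; rewrite ?gt_eqF // ?mulr_gt0 // ltr0n.
have S3 : L * \sum_(j < m.+1) (1 - p j) ^+ n <= eps / 2.
  by rewrite -S2 ler_pM2l.
lra.
Qed.
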